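(* The group of units (invertible elements) of the monoid $SB_n$ is equal to the image of the braid group $Br_n$ in $SB_n$, i.e. to the submonoid of $SB_n$ generated by $\sigma_1^{\pm1},\dots,\sigma_{n-1}^{\pm1}$.
   Context: Fix $n\ge 2$. $SB_n$ is the monoid with generators $\sigma_i,\sigma_i^{-1},x_i$ ($i=1,\dots,n-1$) and relations: $\sigma_i\sigma_j=\sigma_j\sigma_i$ and $x_ix_j=x_jx_i$ if $|i-j|>1$; $x_i\sigma_j=\sigma_jx_i$ if $|i-j|\ne1$; $\sigma_i\sigma_{i+1}\sigma_i=\sigma_{i+1}\sigma_i\sigma_{i+1}$; $\sigma_i\sigma_{i+1}x_i=x_{i+1}\sigma_i\sigma_{i+1}$; $\sigma_{i+1}\sigma_ix_{i+1}=x_i\sigma_{i+1}\sigma_i$; $\sigma_i\sigma_i^{-1}=\sigma_i^{-1}\sigma_i=1$. The braid group $Br_n$ (generators $\sigma_i$, Artin relations) maps to $SB_n$ by $\sigma_i\mapsto\sigma_i$. *)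

(* Defs.v *)
(* The monoid SB_n given by generators and relations,
   realised as words modulo the congruence generated by the relations. *)
From mathcomp Require Import all_boot.
Set Implicit Arguments. Unset Strict Implicit. Unset Printing Implicit Defensive.

(* Generators sigma_i, sigma_i^{-1}, x_i for i = 1..n-1, indexed 0-based by
   'I_m with m = n - 1 (so ordinal k stands for index k+1). *)
Inductive sbgen (m : nat) : Type :=
| Sg of 'I_m
| Sgi of 'I_m
| Xg of 'I_m.

Definition sbword (m : nat) := seq (sbgen m).

Definition far (i j : nat) : bool := (i.+1 < j) || (j.+1 < i).
Definition not_adj (i j : nat) : bool := (i.+1 != j) && (j.+1 != i).

Inductive sbrel (m : nat) : sbword m -> sbword m -> Prop :=
| r_ss (i j : 'I_m) : far i j -> sbrel [:: Sg i; Sg j] [:: Sg j; Sg i]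
| r_xx (i j : 'I_m) : far i j -> sbrel [:: Xg i; Xg j] [:: Xg j; Xg i]
| r_xs (i j : 'I_m) : not_adj i j -> sbrel [:: Xg i; Sg j] [:: Sg j; Xg i]
| r_braid (i j : 'I_m) : val j = (val i).+1 ->
    sbrel [:: Sg i; Sg j; Sg i] [:: Sg j; Sg i; Sg j]
| r_ssx (i j : 'I_m) : val j = (val i).+1 ->
    sbrel [:: Sg i; Sg j; Xg i] [:: Xg j; Sg i; Sg j]
| r_ssx' (i j : 'I_m) : val j = (val i).+1 ->
    sbrel [:: Sg j; Sg i; Xg j] [:: Xg i; Sg j; Sg i]
| r_inv1 (i : 'I_m) : sbrel [:: Sg i; Sgi i] [::]
| r_inv2 (i : 'I_m) : sbrel [:: Sgi i; Sg i] [::].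

Inductive sbeq (m : nat) : sbword m -> sbword m -> Prop :=
| sbeq_refl w : sbeq w w
| sbeq_sym u v : sbeq u v -> sbeq v u
| sbeq_trans u v w : sbeq u v -> sbeq v w -> sbeq u w
| sbeq_step a b u v : sbrel u v -> sbeq (a ++ u ++ b) (a ++ v ++ b).

Definition sb_unit (m : nat) (w : sbword m) : Prop :=
  exists v : sbword m, sbeq (w ++ v) [::] /\ sbeq (v ++ w) [::].

Definition is_sigma_letter (m : nat) (g : sbgen m) : bool :=
  match g with Xg _ => false | _ => true end.

Definition in_braid_image (m : nat) (w : sbword m) : Prop :=
  exists w' : sbword m, all (@is_sigma_letter m) w' /\ sbeq w w'.

(* Main.v *)
Require Import Defs.
From mathcomp Require Import all_boot.
Set Implicit Arguments. Unset Strict Implicit.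

Lemma sbeq_ctx (m : nat) (a b u v : sbword m) :
  sbeq u v -> sbeq (a ++ u ++ b) (a ++ v ++ b).
Proof.
elim=> [w|u' v' _ IH|u' v' w' _ IH1 _ IH2|a' b' u' v' H].
- exact: sbeq_refl.
- exact: sbeq_sym.
- exact: sbeq_trans IH1 IH2.
- have := sbeq_step (a ++ a') (b' ++ b) H. by rewrite -!catA.
Qed.

Definition cntX (m : nat) (w : sbword m) := count (fun g => ~~ is_sigma_letter g) w.

Lemma cntX_inv (m : nat) (u v : sbword m) : sbeq u v -> cntX u = cntX v.
Proof.
rewrite /cntX.
elim=> [//|//|u' v' w' _ -> _ -> //|a b u' v' H].
rewrite !count_cat; congr (_ + (_ + _)).
by case: H.
Qed.

Definition inv_letter (m : nat) (g : sbgen m) : sbgen m :=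
  match g with Sg i => Sgi i | Sgi i => Sg i | Xg i => Xg i end.

Definition inv_word (m : nat) (w : sbword m) := rev (map (@inv_letter m) w).

Lemma inv_ok (m : nat) (w : sbword m) : all (@is_sigma_letter m) w ->
  sbeq (w ++ inv_word w) [::] /\ sbeq (inv_word w ++ w) [::].
Proof.
elim: w => [|g t IH] /=; first by split; apply: sbeq_refl.
move=> /andP [Hg /IH [H1 H2]].
rewrite /inv_word /= rev_cons -/(inv_word t) -cats1.
split.
- apply: sbeq_trans (_ : sbeq ([:: g] ++ [::] ++ [:: inv_letter g]) _).
    have := sbeq_ctx [:: g] [:: inv_letter g] H1. by rewrite /= catA.
  case: g Hg => //= i _.
  + have := sbeq_step [::] [::] (r_inv1 i). by [].
  + have := sbeq_step [::] [::] (r_inv2 i). by [].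
- apply: sbeq_trans H2.
  have H : sbeq ([:: inv_letter g] ++ [:: g]) [::].
    case: g Hg => //= i _.
    + have := sbeq_step [::] [::] (r_inv2 i). by [].
    + have := sbeq_step [::] [::] (r_inv1 i). by [].
  have := sbeq_ctx (inv_word t) t H. by rewrite /= -!catA.
Qed.

Lemma sbeq_catr (m : nat) (u v b : sbword m) : sbeq u v -> sbeq (u ++ b) (v ++ b).
Proof. move=> H; have := sbeq_ctx [::] b H. by []. Qed.
Lemma sbeq_catl (m : nat) (u v a : sbword m) : sbeq u v -> sbeq (a ++ u) (a ++ v).
Proof. move=> H; have := sbeq_ctx a [::] H. by rewrite !cats0. Qed.

Theorem proposition3p1 (n : nat) (hn : 2 <= n) (w : sbword n.-1) :
  sb_unit w <-> in_braid_image w.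
Proof.
split.
- case=> v [H _]. exists w; split; last exact: sbeq_refl.
  have := cntX_inv H. rewrite /cntX count_cat /= => /eqP.
  rewrite addn_eq0 => /andP [/eqP H0 _].
  elim: w H0 {H} => [//|g t IH] /=.
  by case: g => //= i /IH.
- case=> w' [Hall Hw]. have [H1 H2] := inv_ok Hall.
  exists (inv_word w'); split.
  + apply: sbeq_trans H1. exact: sbeq_catr.
  + apply: sbeq_trans H2. exact: sbeq_catl.
Qed.
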